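(* Let $S$ be a finite set with $|S|=\kappa$, and let $r:S\times S\to[0,\infty)$ satisfy $r(x,y)>0$ for all distinct $x,y\in S$ (and $r(x,x)=0$). Consider the inclusion process on $S$ with underlying rates $r$ and parameter $d_N>0$ such that $$\lim_{N\to\infty}d_NN^{\kappa+2}(\log N)^{\kappa-3}=0.$$ Then $\lim_{N\to\infty}\mu_N(\mathcal E_N)=1$.
   Context: $\mathcal H_N=\{\eta\in\{0,1,2,\dots\}^S:\sum_{x\in S}\eta_x=N\}$; for $\eta$ with $\eta_x\ge1$, $\sigma^{x,y}\eta$ is obtained by moving one particle from $x$ to $y$ ($\sigma^{x,y}\eta=\eta$ if $\eta_x=0$). The inclusion process is the continuous-time Markov chain on $\mathcal H_N$ with generator $(\mathcal L_NF)(\eta)=\sum_{x\ne y}\eta_x(d_N+\eta_y)r(x,y)\{F(\sigma^{x,y}\eta)-F(\eta)\}$; $\mu_N$ is its unique invariant probability measure. $\xi_N^x$ is the configuration with all $N$ particles at $x$ and $\mathcal E_N=\{\xi_N^x:x\in S\}$. *)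

(* Defs.v *)
From HB Require Import structures.
From mathcomp Require Import all_boot all_order all_algebra.
From mathcomp Require Import all_classical all_reals all_analysis.
Set Implicit Arguments. Unset Strict Implicit. Unset Printing Implicit Defensive.
Import Order.TTheory GRing.Theory Num.Theory.
Local Open Scope ring_scope.

Section Inclusion.
Variables (S : finType) (N : nat).

Definition config := {ffun S -> 'I_N.+1}.

Definition HN : {set config} := [set eta : config | (\sum_(x : S) (eta x : nat) == N)%N].

Definition sigma (x y : S) (eta : config) : config :=
  if (0 < eta x)%N
  then [ffun z => inord ((eta z : nat) - (z == x) + (z == y))%N]
  else eta.

Definition gen (R : realType) (r : S -> S -> R) (dN : R) (F : config -> R)
    (eta : config) : R :=
  \sum_(x : S) \sum_(y : S | y != x)
     (eta x : nat)%:R * (dN + (eta y : nat)%:R) * r x y * (F (sigma x y eta) - F eta).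

Definition invariant_prob (R : realType) (r : S -> S -> R) (dN : R)
    (mu : config -> R) : Prop :=
  [/\ forall eta, 0 <= mu eta,
      forall eta, eta \notin HN -> mu eta = 0,
      \sum_(eta in HN) mu eta = 1
    & forall F : config -> R, \sum_(eta in HN) mu eta * gen r dN F eta = 0].

Definition xi (x : S) : config := [ffun z => if z == x then ord_max else ord0].
Definition EN : {set config} := [set xi x | x : S].

End Inclusion.

(* Main.v *)
Require Import Defs.
From HB Require Import structures.
From mathcomp Require Import all_boot all_order all_algebra.
From mathcomp Require Import all_classical all_reals all_analysis.
From mathcomp Require Import ring lra zify.
Set Implicit Arguments. Unset Strict Implicit. Unset Printing Implicit Defensive.
Import Order.TTheory GRing.Theory Num.Theory.
Local Open Scope ring_scope.
Section Equil.
Variables (R : realType) (T : finType) (A : T -> T -> R) (B : {set T}).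
Hypothesis antiA : forall x y, A x y = - A y x.

Definition negp (x : R) := if x < 0 then - x else 0.
Definition Am (m : T -> R) z := \sum_y A z y * m y.
Definition Psi (m : T -> R) := \sum_(z in B) negp (Am m z) ^+ 2.
Definition simplex (m : T -> R) :=
  [/\ forall z, 0 <= m z, forall z, z \notin B -> m z = 0 & \sum_z m z = 1].

Lemma negp_ge0 x : 0 <= negp x.
Proof. rewrite /negp; case: ltP => h; lra. Qed.

Lemma negp_mul x : negp x * x = - negp x ^+ 2.
Proof. rewrite /negp; case: ltP => h; rewrite ?expr2; lra. Qed.

Lemma negp_step s h : negp (s + h) ^+ 2 <= negp s ^+ 2 - 2 * negp s * h + h ^+ 2.
Proof. rewrite /negp; do 2 case: ltP => ?; rewrite ?expr2; nra. Qed.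

Lemma le_sum1 (I : finType) (P : pred I) (F : I -> R) i :
  P i -> (forall j, P j -> 0 <= F j) -> F i <= \sum_(j | P j) F j.
Proof.
move=> Pi F0; rewrite (bigD1 i) //= lerDl; apply: sumr_ge0 => j /andP[Pj _]; exact: F0.
Qed.

Definition Amax := \sum_z \sum_y `|A z y|.

Lemma simplex_le1 m : simplex m -> forall z, m z <= 1.
Proof.
case=> m0 _ m1 z; rewrite -m1; apply: (le_sum1 (P := predT)) => //.
Qed.

Lemma Am_bound m : simplex m -> forall z, `|Am m z| <= Amax.
Proof.
move=> sm z; have [m0 _ _] := sm.
apply: (le_trans (ler_norm_sum _ _ _)).
apply: (@le_trans _ _ (\sum_y `|A z y|)).
  apply: ler_sum => y _; rewrite normrM (ger0_norm (m0 y)).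
  by rewrite ler_piMr // simplex_le1.
by apply: (le_sum1 (P := predT) (F := fun z => \sum_y `|A z y|)) => // j _; apply: sumr_ge0.
Qed.

Lemma Amax_ge0 : 0 <= Amax.
Proof. by apply: sumr_ge0 => z _; apply: sumr_ge0. Qed.

Lemma antisym_zero w : \sum_z w z * Am w z = 0.
Proof.
set X := LHS.
have : X = - X.
  rewrite {1}/X /Am.
  under eq_bigr do rewrite mulr_sumr.
  rewrite exchange_big /= /X /Am -sumrN; apply: eq_bigr => y _.
  rewrite mulr_sumr -sumrN; apply: eq_bigr => z _.
  rewrite antiA; ring.
move=> h; lra.
Qed.

Definition Kc := \sum_(z : T) (2 * Amax) ^+ 2.

Lemma step (e : R) m : 0 < e -> simplex m -> e ^+ 2 < Psi m ->
  exists m', simplex m' /\ Psi m' <= Psi m - e ^+ 4 / (Kc + e ^+ 2).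
Proof.
move=> e0 sm hP; have [m0 mB m1] := sm.
pose w z := if z \in B then negp (Am m z) else 0.
have w0 z : 0 <= w z by rewrite /w; case: ifP => _ //; exact: negp_ge0.
pose s := \sum_z w z.
have s0 : 0 < s.
  rewrite lt_def sumr_ge0 ?andbT //; apply/negP => /eqP/psumr_eq0P h.
  have {}h := h (fun z _ => w0 z).
  have : Psi m = 0.
    rewrite /Psi big1 // => z zB; have := h z isT; rewrite /w zB => ->; by rewrite expr0n.
  move=> P0; rewrite P0 in hP; have : 0 < e ^+ 2 by rewrite exprn_gt0.
  lra.
pose m2 z := w z / s.
have sm2 : simplex m2.
  split.
  - by move=> z; rewrite /m2 divr_ge0 // ltW.
  - by move=> z zB; rewrite /m2 /w (negbTE zB) mul0r.
  - by rewrite /m2 -mulr_suml divff // gt_eqF.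
pose t := e ^+ 2 / (Kc + e ^+ 2).
have Kc0 : 0 <= Kc by apply: sumr_ge0 => z _; apply: sqr_ge0.
have e20 : 0 < e ^+ 2 by rewrite exprn_gt0.
have t0 : 0 < t by rewrite divr_gt0 // ltr_wpDl.
have t1 : t <= 1 by rewrite ler_pdivrMr ?ltr_wpDl // mul1r lerDr.
pose m' z := (1 - t) * m z + t * m2 z.
have [m20 m2B m21] := sm2.
exists m'; split.
  split.
  - move=> z; rewrite /m'; apply: addr_ge0; apply: mulr_ge0 => //; lra.
  - by move=> z zB; rewrite /m' mB // m2B // !mulr0 addr0.
  - by rewrite /m' big_split /= -!mulr_sumr m1 m21; ring.
pose b z := Am m2 z - Am m z.
have Am' z : Am m' z = Am m z + t * b z.
  rewrite /b /Am.
  have -> : \sum_y A z y * m y + t * (\sum_y A z y * m2 y - \sum_y A z y * m y)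
     = \sum_y (A z y * m y + t * (A z y * m2 y - A z y * m y)).
    by rewrite big_split /= -mulr_sumr sumrB.
  apply: eq_bigr => y _; rewrite /m'; ring.
have b2 z : b z ^+ 2 <= (2 * Amax) ^+ 2.
  have h1 := Am_bound sm2 z; have h2 := Am_bound sm z.
  have : `|b z| <= 2 * Amax by rewrite /b (le_trans (ler_normB _ _)) //; lra.
  rewrite ler_norml => /andP[h3 h4]; have := Amax_ge0; rewrite !expr2; nra.
have key : \sum_(z in B) negp (Am m z) * b z = Psi m.
  have -> : \sum_(z in B) negp (Am m z) * b z = \sum_z w z * b z.
    rewrite [RHS](bigID (fun z => z \in B)) /= [X in _ = _ + X]big1 ?addr0.
      by apply: eq_bigr => z zB; rewrite /w zB.
    by move=> z /negbTE zB; rewrite /w zB mul0r.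
  have -> : \sum_z w z * b z = \sum_z s * (m2 z * Am m2 z) - \sum_z w z * Am m z.
    rewrite -sumrB; apply: eq_bigr => z _; rewrite /b /m2; field; by rewrite gt_eqF.
  rewrite -mulr_sumr antisym_zero mulr0 sub0r.
  rewrite [X in - X](bigID (fun z => z \in B)) /= [X in - (_ + X)]big1 ?addr0.
    rewrite /Psi -sumrN; apply: eq_bigr => z zB; rewrite /w zB negp_mul; ring.
  by move=> z /negbTE zB; rewrite /w zB mul0r.
have sb : \sum_(z in B) b z ^+ 2 <= Kc.
  apply: (@le_trans _ _ (\sum_(z in B) (2 * Amax) ^+ 2)); first by apply: ler_sum.
  rewrite /Kc [X in _ <= X](bigID (fun z => z \in B)) /= lerDl.
  by apply: sumr_ge0 => z _; apply: sqr_ge0.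
have H1 : Psi m' <= Psi m - 2 * t * Psi m + t ^+ 2 * Kc.
  apply: (@le_trans _ _ (\sum_(z in B) (negp (Am m z) ^+ 2 - 2 * negp (Am m z) * (t * b z) + (t * b z) ^+ 2))).
    by rewrite /Psi; apply: ler_sum => z _; rewrite Am'; apply: negp_step.
  rewrite !big_split /=.
  have -> : \sum_(z in B) - (2 * negp (Am m z) * (t * b z)) = - (2 * t * \sum_(z in B) negp (Am m z) * b z).
    rewrite mulr_sumr -sumrN; apply: eq_bigr => z _; ring.
  have -> : \sum_(z in B) (t * b z) ^+ 2 = t ^+ 2 * \sum_(z in B) b z ^+ 2.
    rewrite mulr_sumr; apply: eq_bigr => z _; ring.
  rewrite key -/(Psi m).
  have : t ^+ 2 * \sum_(z in B) b z ^+ 2 <= t ^+ 2 * Kc by apply: ler_wpM2l => //; exact: sqr_ge0.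
  lra.
have H2 : t * Kc <= e ^+ 2.
  rewrite /t mulrAC ler_pdivrMr ?ltr_wpDl //. nra.
have H3 : e ^+ 4 / (Kc + e ^+ 2) = t * e ^+ 2.
  rewrite /t; field; apply/negP => /eqP h; lra.
rewrite H3.
have : t * (t * Kc) <= t * e ^+ 2 by rewrite ler_pM2l.
have : 2 * t * e ^+ 2 <= 2 * t * Psi m by apply: ler_wpM2l; [lra | exact: ltW].
rewrite expr2 in H1 *.
nra.
Qed.

Lemma Psi_ge0 m : 0 <= Psi m.
Proof. by apply: sumr_ge0 => z _; apply: sqr_ge0. Qed.

Lemma iter_step (e : R) m0 : 0 < e -> simplex m0 -> forall n : nat,
  exists m, simplex m /\ (Psi m <= e ^+ 2 \/ Psi m <= Psi m0 - n%:R * (e ^+ 4 / (Kc + e ^+ 2))).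
Proof.
move=> e0 sm0; elim=> [|n [m [sm h]]].
  by exists m0; split => //; right; rewrite mul0r subr0.
case: (leP (Psi m) (e ^+ 2)) => hm.
  by exists m; split => //; left.
have [m' [sm' hm']] := step e0 sm hm.
exists m'; split => //; right.
case: h => h; first by lra.
rewrite -addn1 natrD mulrDl mul1r; lra.
Qed.

Lemma equil (e : R) : (0 < #|B|)%N -> 0 < e ->
  exists m, simplex m /\ forall z, z \in B -> - e <= Am m z.
Proof.
move=> /card_gt0P [b bB] e0.
pose m0 z : R := if z == b then 1 else 0.
have sm0 : simplex m0.
  split.
  - by move=> z; rewrite /m0; case: ifP.
  - by move=> z zB; rewrite /m0; case: eqP => // zb; rewrite zb bB in zB.
  - by rewrite (bigD1 b) //= /m0 eqxx big1 ?addr0 // => z /negbTE ->.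
have Kc0 : 0 <= Kc by apply: sumr_ge0 => z _; apply: sqr_ge0.
have e20 : 0 < e ^+ 2 by rewrite exprn_gt0.
set g := e ^+ 4 / (Kc + e ^+ 2).
have g0 : 0 < g by rewrite /g divr_gt0 ?exprn_gt0 // ltr_wpDl.
have [n hn] : exists n : nat, Psi m0 / g < n%:R.
  exists (Num.trunc (Psi m0 / g)).+1; exact: truncnS_gt.
have [m [sm h]] := iter_step e0 sm0 n.
have hP : Psi m <= e ^+ 2.
  case: h => // h; exfalso.
  rewrite -/g in h; have := Psi_ge0 m; move: hn; rewrite ltr_pdivrMr // => hn; lra.
exists m; split => // z zB.
have : negp (Am m z) ^+ 2 <= e ^+ 2.
  apply: le_trans hP; rewrite /Psi; apply: (le_sum1 (P := fun z => z \in B) (F := fun z => negp (Am m z) ^+ 2)) => // j _; exact: sqr_ge0.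
rewrite /negp; case: ltP => h1; last by lra.
rewrite ler_sqr ?nnegrE; [lra | lra | exact: ltW].
Qed.

End Equil.

Section Config.
Variables (S : finType) (N : nat).
Local Notation cfg := (config S N).

Lemma pair_le (eta : cfg) x y : eta \in HN S N -> x != y ->
  ((eta x : nat) + (eta y : nat) <= N)%N.
Proof.
rewrite inE => /eqP hs xy; apply: (leq_trans _ (eq_leq hs)).
rewrite (bigD1 x) //= (bigD1 y) /=; last by rewrite eq_sym.
by rewrite addnA leq_addr.
Qed.

Lemma sum_eta (eta : cfg) : eta \in HN S N -> (\sum_z (eta z : nat) = N)%N.
Proof. by rewrite inE => /eqP. Qed.

Lemma sigma_val (eta : cfg) x y : eta \in HN S N -> x != y -> (0 < eta x)%N ->
  forall z, (sigma x y eta z : nat) = ((eta z : nat) - (z == x) + (z == y))%N.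
Proof.
move=> hH xy px z; rewrite /sigma px ffunE inordK //.
have hz := ltn_ord (eta z).
case: (eqVneq z y) => [->|zy].
  rewrite eq_sym (negbTE xy) subn0 addn1 ltnS.
  have := pair_le hH xy; lia.
rewrite addn0; apply: leq_ltn_trans hz; exact: leq_subr.
Qed.

Lemma sigma_id (eta : cfg) x y : ~~ (0 < eta x)%N -> sigma x y eta = eta.
Proof. by rewrite /sigma => /negbTE ->. Qed.

Lemma notEN_lt (eta : cfg) y : eta \in HN S N -> eta \notin EN S N -> ((eta y : nat) < N)%N.
Proof.
move=> hH; apply: contraR; rewrite -leqNgt => hy.
have ey : (eta y : nat) = N by apply/eqP; rewrite eqn_leq hy -ltnS ltn_ord.
apply/imsetP; exists y => //; apply/ffunP => z; rewrite ffunE; apply: val_inj => /=.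
case: (eqVneq z y) => [->//|zy].
have := pair_le hH zy; rewrite ey => h; change ((eta z : nat) = 0%N); lia.
Qed.

End Config.

Lemma sum2 (R : realType) (S : finType) (f g : S -> R) x y : x != y ->
  (forall z, z != x -> z != y -> f z = g z) ->
  \sum_z f z - \sum_z g z = (f x - g x) + (f y - g y).
Proof.
move=> xy h; rewrite -sumrB (bigD1 x) //= (bigD1 y) /=; last by rewrite eq_sym.
rewrite big1 ?addr0 // => z /andP[zx zy]; rewrite h ?subrr //.
Qed.

Section Main.
Variables (R : realType) (S : finType) (N : nat) (r : S -> S -> R) (dN : R)
  (mB : {set S} -> S -> R) (c Rs : R).
Hypotheses (r0 : forall x, r x x = 0) (rge : forall x y, x != y -> c <= r x y)
  (c0 : 0 < c) (rnn : forall x y, 0 <= r x y) (rle : forall x, \sum_y r x y <= Rs)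
  (d0 : 0 < dN) (N1 : (0 < N)%N).
Definition Amat (z y : S) := r y z - r z y.
Hypothesis hmB : forall B : {set S}, (0 < #|B|)%N ->
  simplex B (mB B) /\ forall z, z \in B -> - dN <= Am Amat (mB B) z.

Local Notation cfg := (config S N).
Definition supp (eta : cfg) : {set S} := [set z | (0 < eta z)%N].
Definition Hk (k : nat) : R := \sum_(i < k) (i.+1%:R)^-1.
Definition Kk : R := N.+1%:R.
Definition Fv (eta : cfg) : R :=
  - (Kk * #|supp eta|%:R) - \sum_z mB (supp eta) z * Hk (eta z).
Definition Mb : R := Kk * #|S|%:R + N%:R.

Lemma Hk0 : Hk 0 = 0.
Proof. by rewrite /Hk big_ord0. Qed.

Lemma HkS k : Hk k.+1 = Hk k + (k.+1%:R)^-1.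
Proof. by rewrite /Hk big_ord_recr. Qed.

Lemma Hk_ge0 k : 0 <= Hk k.
Proof. by apply: sumr_ge0 => i _; rewrite invr_ge0. Qed.

Lemma Hk_le k : Hk k <= k%:R.
Proof.
elim: k => [|k IH]; first by rewrite Hk0.
rewrite HkS -addn1 natrD; apply: lerD => //.
have := ler0n R k; move=> hk; rewrite invf_le1; lra.
Qed.

Lemma supp_gt0 (eta : cfg) : eta \in HN S N -> (0 < #|supp eta|)%N.
Proof.
move=> hH; rewrite lt0n; apply/negP => /eqP /cards0_eq h.
have : (\sum_z (eta z : nat) = 0)%N.
  apply/eqP; rewrite sum_nat_eq0; apply/forallP => z.
  have : z \notin supp eta by rewrite h inE.
  by rewrite inE lt0n negbK.
by rewrite sum_eta // => N0; move: N1; rewrite N0.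
Qed.

Lemma msum_bounds (eta : cfg) :
  0 <= \sum_z mB (supp eta) z * Hk (eta z) <= N%:R.
Proof.
case: (posnP #|supp eta|) => hs.
  rewrite big1 ?lexx ?ler0n // => z _.
  have : z \notin supp eta by move/eqP: hs; rewrite cards_eq0 => /eqP ->; rewrite inE.
  by rewrite inE -leqNgt leqn0 => /eqP ->; rewrite Hk0 mulr0.
have [[m0 mB0 m1] _] := hmB hs.
apply/andP; split; first by apply: sumr_ge0 => z _; rewrite mulr_ge0 ?Hk_ge0.
apply: (@le_trans _ _ (\sum_z mB (supp eta) z * N%:R)).
  apply: ler_sum => z _; apply: ler_wpM2l => //; apply: le_trans (Hk_le _) _.
  by rewrite ler_nat -ltnS ltn_ord.
by rewrite -mulr_suml m1 mul1r.
Qed.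

Lemma Fv_le0 eta : Fv eta <= 0.
Proof.
rewrite /Fv; have /andP[h _] := msum_bounds eta.
have : 0 <= Kk * #|supp eta|%:R by rewrite mulr_ge0 ?ler0n.
lra.
Qed.

Lemma Fv_ge eta : - Mb <= Fv eta.
Proof.
rewrite /Fv /Mb; have /andP[_ h] := msum_bounds eta.
have : Kk * #|supp eta|%:R <= Kk * #|S|%:R.
  by rewrite ler_wpM2l ?ler0n // ler_nat max_card.
lra.
Qed.

Lemma pair_bound (eta : cfg) x y : eta \in HN S N -> x != y ->
  r x y * (mB (supp eta) x * (eta y : nat)%:R - mB (supp eta) y * (eta x : nat)%:R
     + mB (supp eta) y * (eta x : nat)%:R / ((eta y : nat)%:R + 1))
  <= (eta x : nat)%:R * (eta y : nat)%:R * r x y * (Fv (sigma x y eta) - Fv eta).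
Proof.
move=> hH xy.
have sm := (hmB (supp_gt0 hH)).1; have [m0 mout _] := sm.
set m := mB (supp eta) in sm m0 mout *.
have m1 z : m z <= 1 by exact: simplex_le1 sm z.
have rxy := rnn x y.
case: (posnP (eta x)) => ax.
  rewrite sigma_id ?ax // subrr mulr0 mout ?inE ?ax //.
  rewrite mul0r mulr0 !mul0r subr0 add0r mulr0; lra.
case: (posnP (eta y)) => ay.
  rewrite ay (mout y) ?inE ?ay //; rewrite !(mulr0n, mulr0, mul0r, subr0, addr0, add0r, sub0r, oppr0). by [].
have sv := sigma_val hH xy ax.
set a : R := (eta x : nat)%:R; set b : R := (eta y : nat)%:R.
have b1 : 1 <= b by rewrite /b (ler1n R).
have a1 : 1 <= a by rewrite /a (ler1n R).
have svx : (sigma x y eta x : nat) = ((eta x : nat).-1)%N.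
  by rewrite sv eqxx (negbTE xy) subn1 addn0.
have svy : (sigma x y eta y : nat) = ((eta y : nat).+1)%N.
  by rewrite sv eqxx eq_sym (negbTE xy) subn0 addn1.
have svz z : z != x -> z != y -> (sigma x y eta z : nat) = eta z.
  by move=> zx zy; rewrite sv (negbTE zx) (negbTE zy) subn0 addn0.
case: (ltngtP 1 (eta x)) => [a2 | a0 | ea1]; last first; last 2 first.
- by exfalso; move: a0 ax; lia.
- have ss : supp (sigma x y eta) = supp eta.
    apply/setP => z; rewrite !inE.
    case: (eqVneq z x) => [->|zx]; first by rewrite svx; lia.
    case: (eqVneq z y) => [->|zy]; first by rewrite svy; lia.
    by rewrite svz.
  have dF : Fv (sigma x y eta) - Fv eta = m x / a - m y / (b + 1).
    rewrite /Fv ss -/m.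
    have e : \sum_z m z * Hk (sigma x y eta z) - \sum_z m z * Hk (eta z) =
      m x * (Hk (sigma x y eta x) - Hk (eta x)) + m y * (Hk (sigma x y eta y) - Hk (eta y)).
      rewrite (@sum2 R S _ _ x y xy); first ring.
      by move=> z zx zy /=; rewrite svz.
    have hx : Hk (eta x) = Hk (eta x).-1 + a^-1.
      by rewrite /a -{1 3}(prednK ax) HkS.
    rewrite svx svy HkS hx -natr1 -/b in e.
    have -> : - (Kk * #|supp eta|%:R) - \sum_z m z * Hk (sigma x y eta z) -
      (- (Kk * #|supp eta|%:R) - \sum_z m z * Hk (eta z)) =
      - (\sum_z m z * Hk (sigma x y eta z) - \sum_z m z * Hk (eta z)) by ring.
    rewrite e; ring.
  rewrite dF le_eqVlt; apply/orP; left; apply/eqP; field.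
  apply/andP; split; apply/negP => /eqP h; lra.
- have ssub : supp (sigma x y eta) \proper supp eta.
    apply/properP; split.
      apply/fintype.subsetP => z; rewrite !inE.
      case: (eqVneq z x) => [->|zx]; first by rewrite svx; lia.
      case: (eqVneq z y) => [->|zy]; first by rewrite ay.
      by rewrite svz.
    by exists x; rewrite !inE ?svx; lia.
  have hc : (#|supp (sigma x y eta)|.+1 <= #|supp eta|)%N by exact: proper_card.
  have hcR : #|supp (sigma x y eta)|%:R + 1 <= #|supp eta|%:R :> R.
    by rewrite natr1 ler_nat.
  have dF : 1 <= Fv (sigma x y eta) - Fv eta.
    rewrite /Fv; have /andP[_ h1] := msum_bounds (sigma x y eta).
    have /andP[h2 _] := msum_bounds eta.
    have : Kk * (#|supp (sigma x y eta)|%:R + 1) <= Kk * #|supp eta|%:R.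
      by rewrite ler_wpM2l // /Kk ler0n.
    rewrite /Kk -natr1; lra.
  have ea : a = 1 by rewrite /a -ea1.
  rewrite ea mul1r.
  have hmy : m y / (b + 1) <= m y.
    rewrite ler_pdivrMr; last lra.
    have := m0 y; nra.
  have h1 : m x * b - m y * 1 + m y * 1 / (b + 1) <= b.
    have := m0 x; have := m1 x; rewrite !mulr1; nra.
  have h2 : r x y * (m x * b - m y * 1 + m y * 1 / (b + 1)) <= r x y * b.
    by rewrite ler_wpM2l.
  have h3 : r x y * b <= b * r x y * (Fv (sigma x y eta) - Fv eta).
    rewrite [b * _]mulrC -[X in X <= _]mulr1 ler_wpM2l // mulr_ge0 //; lra.
  lra.
Qed.

Lemma sumn_R (eta : cfg) : eta \in HN S N -> \sum_z ((eta z : nat)%:R : R) = N%:R.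
Proof. by move=> hH; rewrite -natr_sum sum_eta. Qed.

Lemma P1_eq (m : S -> R) (n : S -> R) :
  \sum_x \sum_y (r x y * (m x * n y) - r x y * (m y * n x)) =
  \sum_z n z * Am Amat m z.
Proof.
have -> : \sum_z n z * Am Amat m z =
   \sum_z \sum_y (n z * r y z * m y) - \sum_z \sum_y (n z * r z y * m y).
  rewrite -sumrB; apply: eq_bigr => z _; rewrite /Am mulr_sumr -sumrB.
  by apply: eq_bigr => y _; rewrite /Amat; ring.
have -> : \sum_x \sum_y (r x y * (m x * n y) - r x y * (m y * n x)) =
   \sum_x \sum_y (r x y * (m x * n y)) - \sum_x \sum_y (r x y * (m y * n x)).
  by rewrite -sumrB; apply: eq_bigr => x _; rewrite sumrB.
congr (_ - _).
  rewrite exchange_big /=; apply: eq_bigr => z _; apply: eq_bigr => y _; ring.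
by apply: eq_bigr => z _; apply: eq_bigr => y _; ring.
Qed.

Lemma gen_bound (eta : cfg) : eta \in HN S N ->
  - (dN * N%:R * (1 + Mb * Rs)) + (if eta \in EN S N then 0 else c / N.+1%:R)
  <= gen r dN Fv eta.
Proof.
move=> hH.
have sm := (hmB (supp_gt0 hH)).1; have [m0 mout m1] := sm.
have hAm := (hmB (supp_gt0 hH)).2.
set m := mB (supp eta) in sm m0 mout m1 hAm *.
pose n z : R := (eta z : nat)%:R.
have n0 z : 0 <= n z by rewrite /n ler0n.
have sn : \sum_z n z = N%:R by exact: sumn_R.
pose Low x y := r x y * (m x * n y - m y * n x + m y * n x / (n y + 1)).
pose D x y := dN * Mb * (n x * r x y).
have Mb0 : 0 <= Mb by rewrite /Mb addr_ge0 ?mulr_ge0 ?ler0n // /Kk ler0n.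
have step1 : \sum_x \sum_(y | y != x) (Low x y - D x y) <= gen r dN Fv eta.
  apply: ler_sum => x _; apply: ler_sum => y yx.
  have xy : x != y by rewrite eq_sym.
  have hp := pair_bound hH xy.
  have dF : - Mb <= Fv (sigma x y eta) - Fv eta.
    have := Fv_ge (sigma x y eta); have := Fv_le0 eta; lra.
  have hD : - D x y <= dN * (n x * r x y) * (Fv (sigma x y eta) - Fv eta).
    have p0 : 0 <= dN * (n x * r x y) by apply: mulr_ge0; [exact: ltW | exact: mulr_ge0].
    have h := ler_wpM2l p0 dF; apply: le_trans h.
    by rewrite /D le_eqVlt; apply/orP; left; apply/eqP; ring.
  have -> : (eta x : nat)%:R * (dN + (eta y : nat)%:R) * r x y * (Fv (sigma x y eta) - Fv eta)
     = (eta x : nat)%:R * (eta y : nat)%:R * r x y * (Fv (sigma x y eta) - Fv eta)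
       + dN * (n x * r x y) * (Fv (sigma x y eta) - Fv eta) by rewrite /n; ring.
  move: hp hD; rewrite /Low /D /n /m /= => hp hD; lra.
apply: le_trans step1.
have e1 : \sum_x \sum_(y | y != x) (Low x y - D x y) =
   \sum_x \sum_y Low x y - \sum_x \sum_(y | y != x) D x y.
  rewrite -sumrB; apply: eq_bigr => x _; rewrite sumrB; congr (_ - _).
  rewrite [RHS](bigD1 x) //=; have -> : Low x x = 0 by rewrite /Low r0 mul0r.
  by rewrite add0r.
have e2 : \sum_x \sum_y Low x y =
   \sum_x \sum_y (r x y * (m x * n y) - r x y * (m y * n x)) +
   \sum_y \sum_x r x y * (m y * n x / (n y + 1)).
  rewrite [X in _ = _ + X]exchange_big /= -big_split /=; apply: eq_bigr => x _.
  rewrite -big_split /=; apply: eq_bigr => y _; rewrite /Low; ring.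
have hP1 : - (dN * N%:R) <= \sum_x \sum_y (r x y * (m x * n y) - r x y * (m y * n x)).
  rewrite P1_eq -sn mulr_sumr -sumrN; apply: ler_sum => z _.
  case: (boolP (z \in supp eta)) => hz.
    by have := ler_wpM2l (n0 z) (hAm z hz); lra.
  have -> : n z = 0 by move: hz; rewrite inE -eqn0Ngt /n => /eqP ->.
  by rewrite !mul0r mulr0 oppr0.
have hP2 : (if eta \in EN S N then 0 else c / N.+1%:R) <=
    \sum_y \sum_x r x y * (m y * n x / (n y + 1)).
  have t0 y : 0 <= \sum_x r x y * (m y * n x / (n y + 1)).
    apply: sumr_ge0 => x _; apply: mulr_ge0 => //; apply: mulr_ge0; last first.
      by rewrite invr_ge0 addr_ge0.
    exact: mulr_ge0.
  case: ifP => hE; first by apply: sumr_ge0 => y _; exact: t0.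
  have -> : c / N.+1%:R = \sum_y m y * (c / N.+1%:R) by rewrite -mulr_suml m1 mul1r.
  apply: ler_sum => y _.
  have hy := @notEN_lt S N eta y hH (negbT hE).
  have ny1 : n y + 1 <= N%:R by rewrite /n natr1 ler_nat.
  have hs : c <= \sum_x r x y * n x.
    rewrite (bigD1 y) //= r0 mul0r add0r.
    apply: (@le_trans _ _ (\sum_(x | x != y) c * n x)).
      rewrite -mulr_sumr.
      have -> : \sum_(x | x != y) n x = N%:R - n y.
        by rewrite -sn [X in _ = X - _](bigD1 y) //=; ring.
      have : 1 <= N%:R - n y by lra.
      move=> h; rewrite -[X in X <= _]mulr1; apply: ler_wpM2l => //; exact: ltW.
    by apply: ler_sum => x xy; rewrite ler_wpM2r // rge.
  have -> : \sum_x r x y * (m y * n x / (n y + 1)) =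
      m y / (n y + 1) * \sum_x r x y * n x.
    by rewrite mulr_sumr; apply: eq_bigr => x _; ring.
  have ny0 : 0 < n y + 1 by have := n0 y; lra.
  have hq : m y / N.+1%:R <= m y / (n y + 1).
    apply: ler_wpM2l => //; rewrite lef_pV2 ?posrE //.
    by rewrite -natr1; lra.
  have q0 : 0 <= m y / N.+1%:R by rewrite divr_ge0 ?ler0n.
  have -> : m y * (c / N.+1%:R) = (m y / N.+1%:R) * c by ring.
  apply: ler_pM => //; exact: ltW.
have hD : \sum_x \sum_(y | y != x) D x y <= dN * Mb * Rs * N%:R.
  rewrite -sn mulr_sumr; apply: ler_sum => x _.
  apply: (@le_trans _ _ (\sum_y D x y)).
    rewrite [X in _ <= X](bigD1 x) //= lerDr /D.
    apply: mulr_ge0; [apply: mulr_ge0 => //; exact: ltW | exact: mulr_ge0].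
  rewrite /D -mulr_sumr -mulr_sumr.
  have p : 0 <= dN * Mb by rewrite mulr_ge0 // ltW.
  apply: le_trans (ler_wpM2l p (ler_wpM2l (n0 x) (rle x))) _.
  by rewrite le_eqVlt; apply/orP; left; apply/eqP; ring.
rewrite e1 e2.
have : dN * Mb * Rs * N%:R = dN * N%:R * (Mb * Rs) by ring.
lra.
Qed.
End Main.

Lemma EN_sub_HN (S : finType) (N : nat) : EN S N \subset HN S N.
Proof.
apply/fintype.subsetP => e /imsetP [x _ ->]; rewrite inE.
rewrite (bigD1 x) //= ffunE eqxx big1 ?addn0 // => z zx.
by rewrite ffunE (negbTE zx).
Qed.

Lemma sum_split (R : realType) (S : finType) (N : nat) (mu : config S N -> R) :
  \sum_(eta in HN S N) mu eta =
  \sum_(eta in EN S N) mu eta + \sum_(eta in HN S N) (if eta \in EN S N then 0 else mu eta).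
Proof.
have -> : \sum_(eta in EN S N) mu eta = \sum_(eta in HN S N) (if eta \in EN S N then mu eta else 0).
  rewrite -big_mkcondr /=; apply: eq_bigl => e.
  case: (boolP (e \in EN S N)) => h; last by rewrite andbF.
  by rewrite andbT (fintype.subsetP (EN_sub_HN S N)).
rewrite -big_split /=; apply: eq_bigr => e _; case: ifP => _; ring.
Qed.

Definition cmin (R : realType) (S : finType) (r : S -> S -> R) : R :=
  (1 + \sum_x \sum_(y | y != x) (r x y)^-1)^-1.
Definition Rsum (R : realType) (S : finType) (r : S -> S -> R) : R := \sum_x \sum_y r x y.

Lemma u_bound (R : realType) (S : finType) (r : S -> S -> R) (N : nat) (dN : R)
    (mu : config S N -> R) :
  (forall x, r x x = 0) -> (forall x y, x != y -> 0 < r x y) -> 0 < dN -> (0 < N)%N ->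
  invariant_prob r dN mu ->
  \sum_(eta in HN S N) (if eta \in EN S N then 0 else mu eta)
    <= dN * N%:R * (1 + @Mb R S N * Rsum r) * N.+1%:R / cmin r.
Proof.
move=> r0 rp d0 N1 [mu0 mu_out mu1 mu_inv].
have rnn x y : 0 <= r x y.
  by case: (eqVneq x y) => [->|xy]; [rewrite r0 | exact: ltW (rp _ _ xy)].
set Sg := \sum_x \sum_(y | y != x) (r x y)^-1.
have Sg0 : 0 <= Sg by apply: sumr_ge0 => x _; apply: sumr_ge0 => y _; rewrite invr_ge0.
have c0 : 0 < cmin r by rewrite /cmin invr_gt0 -/Sg; lra.
have rge x y : x != y -> cmin r <= r x y.
  move=> xy; rewrite /cmin -/Sg -[r x y]invrK lef_pV2 ?posrE ?invr_gt0 ?rp //; last lra.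
  have h1 : (r x y)^-1 <= \sum_(y0 | y0 != x) (r x y0)^-1.
    apply: (@le_sum1 R S (fun y0 => y0 != x) (fun y0 => (r x y0)^-1) y); first by rewrite eq_sym.
    by move=> j _; rewrite invr_ge0.
  have h2 : \sum_(y0 | y0 != x) (r x y0)^-1 <= Sg.
    apply: (@le_sum1 R S predT (fun x0 => \sum_(y0 | y0 != x0) (r x0 y0)^-1) x) => // j _.
    by apply: sumr_ge0 => k _; rewrite invr_ge0.
  lra.
have rle x : \sum_y r x y <= Rsum r.
  apply: (le_sum1 (P := predT) (F := fun x => \sum_y r x y)) => // j _.
  by apply: sumr_ge0 => k _.
have anti : forall x y, Amat r x y = - Amat r y x by move=> x y; rewrite /Amat; ring.
have hm : forall B : {set S}, exists m : S -> R, (0 < #|B|)%N ->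
    simplex B m /\ forall z, z \in B -> - dN <= Am (Amat r) m z.
  move=> B; case hB: (0 < #|B|)%N; last by exists (fun _ => 0).
  have [m [sm hz]] := equil anti hB d0; by exists m.
have [mB hmB] := choice hm.
have gb := gen_bound r0 rge c0 rnn rle d0 N1 hmB.
set a := dN * N%:R * (1 + @Mb R S N * Rsum r).
set u := \sum_(eta in HN S N) (if eta \in EN S N then 0 else mu eta).
have : - a + cmin r / N.+1%:R * u <= 0.
  rewrite -(mu_inv (Fv mB)).
  apply: (@le_trans _ _ (\sum_(eta in HN S N) mu eta * (- a + (if eta \in EN S N then 0 else cmin r / N.+1%:R)))).
    rewrite le_eqVlt; apply/orP; left; apply/eqP.
    have -> : \sum_(eta in HN S N) mu eta * (- a + (if eta \in EN S N then 0 else cmin r / N.+1%:R))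
      = \sum_(eta in HN S N) (- a * mu eta + cmin r / N.+1%:R * (if eta \in EN S N then 0 else mu eta)).
      by apply: eq_bigr => e _; case: ifP => _; ring.
    by rewrite big_split /= -!mulr_sumr mu1 mulr1.
  by apply: ler_sum => e he; apply: ler_wpM2l => //; apply: gb.
move=> h.
have N0 : 0 < N.+1%:R :> R by rewrite ltr0n.
have h2 : cmin r / N.+1%:R * u <= a by move: h; rewrite addrC subr_le0.
have h3 : cmin r * u <= a * N.+1%:R by move: h2; rewrite mulrAC ler_pdivrMr.
rewrite ler_pdivlMr // mulrC; exact: h3.
Qed.

Lemma ln_bounds (R : realType) (X : R) : 2 <= X -> 1 / 2 <= ln X /\ ln X <= X.
Proof.
move=> X2; have X0 : 0 < X by lra.
split.
  have h1 := expR_ge1Dx (- (1 / 2) : R).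
  rewrite expRN in h1.
  have e0 : 0 < expR (1 / 2 : R) by exact: expR_gt0.
  have h2 : expR (1 / 2 : R) <= 2.
    have := ler_wpM2l (ltW e0) h1; rewrite mulfV ?gt_eqF //; lra.
  rewrite -[X in X <= _](expRK (1 / 2 : R)).
  rewrite ler_ln ?posrE //; lra.
have h := expR_ge1Dx (ln X); rewrite lnK ?posrE // in h; lra.
Qed.

Lemma f_lower2 (R : realType) (X d : R) : 2 <= X -> 0 < d ->
  d * X ^+ 3 <= d * X ^+ (2 + 2) * ln X ^ (2%:Z - 3).
Proof.
move=> X2 d0; have [l1 l2] := ln_bounds X2.
have -> : (2%:Z - 3 = - 1)%R by [].
rewrite exprN1.
have l0 : 0 < ln X by lra.
have key : X ^+ 3 <= X ^+ (2 + 2) / ln X.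
  rewrite ler_pdivlMr //.
  have -> : X ^+ (2 + 2) = X ^+ 3 * X by rewrite -exprSr.
  by apply: ler_wpM2l; [rewrite exprn_ge0 //; lra | lra].
by rewrite -mulrA; apply: ler_wpM2l => //; exact: ltW.
Qed.

Lemma f_lower3 (R : realType) (k : nat) (X d : R) : 2 <= X -> 0 < d ->
  d * X ^+ 3 <= 2 ^+ k * (d * X ^+ (k + 3 + 2) * ln X ^ ((k + 3)%N%:Z - 3)).
Proof.
move=> X2 d0; have [l1 l2] := ln_bounds X2.
have -> : ((k + 3)%N%:Z - 3 = k%:Z)%R by rewrite PoszD addrK.
rewrite -exprnP.
have hl : (1 / 2) ^+ k <= ln X ^+ k by rewrite lerXn2r ?nnegrE //; lra.
have X3 : 0 <= X ^+ 3 by rewrite exprn_ge0 //; lra.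
have hX : X ^+ 3 <= X ^+ (k + 3 + 2).
  have -> : (k + 3 + 2 = 3 + (k + 2))%N by lia.
  rewrite exprD -[X in X <= _]mulr1; apply: ler_wpM2l => //.
  by rewrite exprn_ege1 //; lra.
have h2 : 2 ^+ k * (1 / 2) ^+ k = 1 :> R by rewrite -exprMn mul1r divff // expr1n.
have : X ^+ 3 * 1 <= X ^+ (k + 3 + 2) * (2 ^+ k * ln X ^+ k).
  apply: ler_pM; [exact: X3 | lra | exact: hX | ].
  apply: (@le_trans _ _ (2 ^+ k * (1 / 2) ^+ k)); first by rewrite h2.
  apply: ler_wpM2l => //; exact: exprn_ge0.
rewrite mulr1 => h.
have := ler_wpM2l (ltW d0) h.
move=> h3; apply: le_trans h3 _; rewrite le_eqVlt; apply/orP; left; apply/eqP; ring.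
Qed.

Lemma poly_bound (R : realType) (X K Rs d c : R) : 1 <= X -> 0 <= K -> 0 <= Rs -> 0 < d -> 0 < c ->
  d * X * (1 + ((X + 1) * K + X) * Rs) * (X + 1) / c
  <= (2 * ((1 + Rs) * (2 + 2 * K)) / c) * (d * X ^+ 3).
Proof.
move=> X1 K0 R0 d0 c0.
set c1 := (1 + Rs) * (2 + 2 * K).
have hA : 1 + ((X + 1) * K + X) * Rs <= c1 * X.
  have h1 : 0 <= K * Rs * (X - 1) by rewrite !mulr_ge0 //; lra.
  have h2 : 0 <= K * X by rewrite mulr_ge0 //; lra.
  have h3 : 0 <= Rs * X by rewrite mulr_ge0 //; lra.
  rewrite /c1; nra.
have A0 : 0 <= 1 + ((X + 1) * K + X) * Rs by rewrite addr_ge0 // mulr_ge0 //; nra.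
have dX : 0 <= d * X by rewrite mulr_ge0 //; lra.
have h : d * X * (1 + ((X + 1) * K + X) * Rs) * (X + 1) <= d * X * (c1 * X) * (2 * X).
  apply: ler_pM; [by rewrite mulr_ge0 | lra | | lra].
  exact: ler_wpM2l.
have -> : 2 * c1 / c * (d * X ^+ 3) = d * X * (c1 * X) * (2 * X) / c.
  by rewrite !exprS expr0; field; apply/negP => /eqP h'; lra.
by apply: ler_wpM2r => //; rewrite invr_ge0 ltW.
Qed.

Lemma small_S (S : finType) (N : nat) (eta : config S N) :
  (#|S| <= 1)%N -> (0 < N)%N -> eta \in HN S N -> eta \in EN S N.
Proof.
move=> hS N1 hH; apply/negPn/negP => hE.
have hs := sum_eta hH.
case: (pickP (@predT S)) => [x _ | h0].
  have hx := @notEN_lt S N eta x hH hE.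
  have : (\sum_z (eta z : nat) = eta x)%N.
    rewrite (bigD1 x) //= big1 ?addn0 // => z zx.
    by move/fintype_le1P: hS => /(_ x) h; rewrite (h z) eqxx in zx.
  lia.
have : (\sum_z (eta z : nat) = 0)%N by rewrite big_pred0.
lia.
Qed.

Unset Implicit Arguments.
Import numFieldNormedType.Exports.
Local Open Scope classical_set_scope.
Local Open Scope ring_scope.

Theorem theorem3p15 (R : realType) (S : finType) (r : S -> S -> R)
    (d : nat -> R) (mu : forall N : nat, config S N -> R) :
  (forall x, r x x = 0) ->
  (forall x y, x != y -> 0 < r x y) ->
  (forall N, 0 < d N) ->
  (fun N : nat => d N * N%:R ^+ (#|S| + 2) * (ln (N%:R : R)) ^ (#|S|%:Z - 3))
     @ \oo --> (0 : R) ->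
  (forall N, invariant_prob r (d N) (mu N)) ->
  (fun N : nat => \sum_(eta in EN S N) mu N eta) @ \oo --> (1 : R).
Proof.
move=> r0 rp dpos hf hinv.
pose u N := \sum_(eta in HN S N) (if eta \in EN S N then 0 else mu N eta).
have eqs N : \sum_(eta in EN S N) mu N eta = 1 - u N.
  have [_ _ m1 _] := hinv N.
  by rewrite -m1 (sum_split (mu N)) addrK.
have u0 N : 0 <= u N.
  apply: sumr_ge0 => e _; case: ifP => _ //.
  by have [m0 _ _ _] := hinv N; exact: m0.
set f := fun N : nat => _ in hf.
have [C [C0 hC]] : exists C, 0 <= C /\ forall N, (2 <= N)%N -> u N <= C * f N.
  case: (leqP #|S| 1) => hk.
    exists 0; split => // N hN; rewrite mul0r /u big1 // => e he.
    by rewrite (small_S hk _ he) //; lia.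
  have rnn x y : 0 <= r x y.
    by case: (eqVneq x y) => [->|xy]; [rewrite r0 | exact: ltW (rp _ _ xy)].
  have c0 : 0 < cmin r.
    rewrite /cmin invr_gt0; set Sg := (X in 1 + X).
    have : 0 <= Sg by apply: sumr_ge0 => x _; apply: sumr_ge0 => y _; rewrite invr_ge0.
    lra.
  have Rs0 : 0 <= Rsum r by apply: sumr_ge0 => x _; apply: sumr_ge0 => y _.
  have K0 : 0 <= #|S|%:R :> R by rewrite ler0n.
  pose C3 : R := if #|S| == 2%N then 1 else 2 ^+ (#|S| - 3).
  have C30 : 0 <= C3 by rewrite /C3; case: ifP => _ //; rewrite exprn_ge0.
  have C10 : 0 <= 2 * ((1 + Rsum r) * (2 + 2 * #|S|%:R)) / cmin r.
    apply: divr_ge0; last exact: ltW.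
    apply: mulr_ge0 => //; apply: mulr_ge0; lra.
  exists (2 * ((1 + Rsum r) * (2 + 2 * #|S|%:R)) / cmin r * C3); split.
    exact: mulr_ge0.
  move=> N hN.
  have X2 : 2 <= N%:R :> R by rewrite (ler_nat R 2 N).
  have X1 : 1 <= N%:R :> R by lra.
  have h1 := u_bound r0 rp (dpos N) (leq_trans (isT : (0 < 2)%N) hN) (hinv N).
  rewrite /Mb /Kk -natr1 in h1.
  have h2 := poly_bound X1 K0 Rs0 (dpos N) c0.
  have h3 : d N * N%:R ^+ 3 <= C3 * f N.
    rewrite /C3 /f; case: ifP => [/eqP ->|h2ne].
      by rewrite mul1r; apply: f_lower2.
    have -> : #|S| = ((#|S| - 3) + 3)%N by move: hk h2ne => /= hk /negbT/eqP h2ne; lia.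
    rewrite addnK; exact: f_lower3.
  apply: (le_trans h1); apply: (le_trans h2).
  rewrite -[X in _ <= X]mulrA; by apply: ler_wpM2l.
have hu : u N @[N --> \oo] --> (0 : R).
  apply: (@squeeze_cvgr _ _ _ _ (fun _ => 0) (fun N => C * f N)).
  - exists 2%N => // N /= hN; rewrite u0 /=; exact: hC.
  - exact: cvg_cst.
  - by rewrite -(mulr0 C); apply: cvgMl_tmp.
have -> : (fun N : nat => \sum_(eta in EN S N) mu N eta) = (fun N => 1 - u N).
  by apply: funext => N; rewrite eqs.
rewrite -[X in _ --> X]subr0.
exact: (cvgB (cvg_cst _) hu).
Qed.
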